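(* Let $(X_1,T_1,\delta_1,\xi_1,\xi_1\nu_1),\ldots,(X_n,T_n,\delta_n,\xi_n,\xi_n\nu_n)$ be observations from the mixture cure model with partially known cure status described in the context, with distinct observed times, let $K_h(\cdot)=K(\cdot/h)/h$ for a kernel $K$ and bandwidth $h>0$, let $B_{hi}(x)=K_h(x-X_i)/\sum_{j=1}^n K_h(x-X_j)$ be the Nadaraya–Watson weights, let $T_{(1)}<\cdots<T_{(n)}$ be the ordered observed times and let $X_{[i]},\delta_{[i]},\xi_{[i]},\nu_{[i]},B_{h[i]}(x)$ denote the quantities attached to the observation with time $T_{(i)}$. Define $$\widehat S_h^c(t\mid x)=\prod_{i=1}^{n}\left\{1-\frac{\delta_{[i]}B_{h[i]}(x)\mathbf 1(T_{(i)}\le t)}{\sum_{j=i}^{n}B_{h[j]}(x)+\sum_{j=1}^{i-1}B_{h[j]}(x)\mathbf 1(\xi_{[j]}\nu_{[j]}=1)}\right\}$$ and Beran's estimator $$\widehat S_h(t\mid x)=\prod_{i=1}^{n}\left\{1-\frac{\delta_{[i]}B_{h[i]}(x)\mathbf 1(T_{(i)}\le t)}{\sum_{j=i}^{n}B_{h[j]}(x)}\right\}$$ (all denominators assumed nonzero). Then: 1. If $\xi_i\nu_i=0$ for all $i=1,\ldots,n$, then $\widehat S_h^c(t\mid x)=\widehat S_h(t\mid x)$ for all $t$. 2. If there is a fixed known cure threshold $d$ such that, for every $i$, $\xi_i\nu_i=1$ if and only if $T_i\ge d$, then $\widehat S_h^c(t\mid x)=\widehat S_h(t\mid x)$ for all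 $t$. 3. If there is no censoring, i.e. the sample consists of $n_1$ uncured individuals with $\delta_i=1$, $\xi_i\nu_i=0$, $T_i=Y_i<\infty$, and $m=n-n_1$ cured individuals with $Y_i=\infty$, known cure status $\xi_i\nu_i=1$, $\delta_i=0$ and observed times larger than all those of the uncured individuals, then for all finite $t$ below these cured times, $\widehat S_h^c(t\mid x)=\sum_{i=1}^{n}B_{h[i]}(x)\mathbf 1(T_{(i)}>t)$. 4. In the unconditional setting, i.e. with all weights equal to $1/n$, the estimator becomes $\widehat S_n^c(t)=\prod_{i=1}^{n}\left\{1-\frac{\delta_{[i]}\mathbf 1(T_{(i)}\le t)}{n-i+1+\sum_{j=1}^{i-1}\mathbf 1(\xi_{[j]}\nu_{[j]}=1)}\right\}$; and if moreover there is a fixed known $d$ such that an individual is known to be cured if and only if its observed time is at least $d$, then $\widehat S_n^c(t)=\prod_{i=1}^{n}\left\{1-\frac{\delta_{[i]}\mathbf 1(T_{(i)}\le t)}{n-i+1}\right\}$ (the generalized maximum likelihood estimator of Laska and Meisner).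
   Context: Mixture cure model: $Y\in(0,\infty]$ is the survival time, with $Y=\infty$ meaning the subject is cured; $\nu=\mathbf 1(Y=\infty)$ is the cure indicator; $C$ is a censoring time; $X$ is a real covariate. One observes $T=\min(Y,C)$, $\delta=\mathbf 1(Y\le C)$, an indicator $\xi$ of whether the cure status is known ($\xi=1$ known), and $\xi\nu$. Observed individuals fall into three groups: uncured with observed event ($\delta=1,\xi=1,\xi\nu=0$), censored with unknown cure status ($\delta=0,\xi=0,\xi\nu=0$), censored and known to be cured ($\delta=0,\xi=1,\xi\nu=1$). *)

(* Defs.v *)
From mathcomp Require Import all_boot all_order all_algebra.
Set Implicit Arguments. Unset Strict Implicit. Unset Printing Implicit Defensive.
Import Order.TTheory GRing.Theory Num.Theory.
Local Open Scope ring_scope.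

(* Observations are indexed by 'I_n.  [s : 'I_n -> 'I_n] is the ordering map:
   s k is the (original) index of the observation with the (k+1)-th smallest
   observed time, i.e. T_(k+1) = T (s k), X_[k+1] = X (s k), etc.
   Positions k are 0-based: paper's i corresponds to k = i-1. *)

(* The three observable groups of the mixture cure model with partially known
   cure status: (delta, xi, xi*nu) in {(1,1,0); (0,0,0); (0,1,1)}. *)
Definition valid_obs n (delta xi xinu : 'I_n -> bool) : Prop :=
  forall i : 'I_n,
    [/\ delta i, xi i & ~~ xinu i] \/
    [/\ ~~ delta i, ~~ xi i & ~~ xinu i] \/
    [/\ ~~ delta i, xi i & xinu i].

Definition Kh (R : realFieldType) (K : R -> R) (h u : R) : R := K (u / h) / h.

Definition NW_den (R : realFieldType) n (K : R -> R) (h : R) (X : 'I_n -> R)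
  (x : R) : R := \sum_(j < n) Kh K h (x - X j).

Definition NW (R : realFieldType) n (K : R -> R) (h : R) (X : 'I_n -> R)
  (x : R) (i : 'I_n) : R := Kh K h (x - X i) / NW_den K h X x.

Definition cure_den (R : realFieldType) n (B : 'I_n -> R) (xinu : 'I_n -> bool)
  (s : 'I_n -> 'I_n) (k : 'I_n) : R :=
  \sum_(j < n | (k <= j)%N) B (s j) + \sum_(j < n | (j < k)%N) B (s j) * (xinu (s j))%:R.

Definition beran_den (R : realFieldType) n (B : 'I_n -> R) (s : 'I_n -> 'I_n)
  (k : 'I_n) : R := \sum_(j < n | (k <= j)%N) B (s j).

Definition Sc_gen (R : realFieldType) n (B : 'I_n -> R) (T : 'I_n -> R)
  (delta xinu : 'I_n -> bool) (s : 'I_n -> 'I_n) (t : R) : R :=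
  \prod_(k < n)
     (1 - (delta (s k))%:R * B (s k) * (T (s k) <= t)%R%:R / cure_den B xinu s k).

Definition Sb_gen (R : realFieldType) n (B : 'I_n -> R) (T : 'I_n -> R)
  (delta : 'I_n -> bool) (s : 'I_n -> 'I_n) (t : R) : R :=
  \prod_(k < n)
     (1 - (delta (s k))%:R * B (s k) * (T (s k) <= t)%R%:R / beran_den B s k).

Definition Sc_h (R : realFieldType) n (K : R -> R) (h : R) (X T : 'I_n -> R)
  (delta xinu : 'I_n -> bool) (s : 'I_n -> 'I_n) (t x : R) : R :=
  Sc_gen (NW K h X x) T delta xinu s t.

Definition Beran_h (R : realFieldType) n (K : R -> R) (h : R) (X T : 'I_n -> R)
  (delta : 'I_n -> bool) (s : 'I_n -> 'I_n) (t x : R) : R :=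
  Sb_gen (NW K h X x) T delta s t.

Definition Sc_n (R : realFieldType) n (T : 'I_n -> R)
  (delta xinu : 'I_n -> bool) (s : 'I_n -> 'I_n) (t : R) : R :=
  Sc_gen (fun _ : 'I_n => (n%:R)^-1) T delta xinu s t.

(* Main.v *)
Require Import Defs.
From mathcomp Require Import all_boot all_order all_algebra.
From mathcomp Require Import ring lra.
Import Order.TTheory GRing.Theory Num.Theory.
Local Open Scope ring_scope.

Lemma thr_false (R : realFieldType) (n : nat) (T : 'I_n -> R)
  (delta xi xinu : 'I_n -> bool) (s : 'I_n -> 'I_n) (d : R) (k j : 'I_n) :
  valid_obs delta xi xinu ->
  (forall k l : 'I_n, (k < l)%N -> T (s k) < T (s l)) ->
  (forall i, xinu i = (d <= T i)) ->
  delta (s k) -> (j < k)%N -> xinu (s j) = false.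
Proof.
move=> Hv Hs Hx Hd Hj.
have hk : xinu (s k) = false.
  by case: (Hv (s k)) => [[_ _ /negbTE ->]|[[]|[]]]; rewrite ?Hd.
rewrite Hx in hk; move/negbT: hk; rewrite -ltNge => hk.
rewrite Hx; apply/negbTE; rewrite -ltNge.
exact: lt_trans (Hs j k Hj) hk.
Qed.

Lemma sum_ge_const (R : realFieldType) n (k : nat) (c : R) :
  \sum_(j < n | (k <= j)%N) c = c *+ (n - k).
Proof.
have -> : \sum_(j < n | (k <= j)%N) c = \sum_(j < n | xpredT j && (k <= j)%N) c by [].
by rewrite -(big_geq_mkord _ _ xpredT (fun=> c)) sumr_const_nat.
Qed.

Theorem proposition1 (R : realFieldType) (n : nat)
  (X T : 'I_n -> R) (delta xi xinu : 'I_n -> bool)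
  (K : R -> R) (h : R) (s : 'I_n -> 'I_n) :
  0 < h ->
  valid_obs delta xi xinu ->
  injective T ->
  (forall k l : 'I_n, (k < l)%N -> T (s k) < T (s l)) ->
  [/\
   (* 1. no individual known to be cured *)
   (forall x t : R,
      NW_den K h X x != 0 ->
      (forall k, cure_den (NW K h X x) xinu s k != 0) ->
      (forall k, beran_den (NW K h X x) s k != 0) ->
      (forall i, xinu i = false) ->
      Sc_h K h X T delta xinu s t x = Beran_h K h X T delta s t x),
   (* 2. known cure threshold d *)
   (forall d x t : R,
      NW_den K h X x != 0 ->
      (forall k, cure_den (NW K h X x) xinu s k != 0) ->
      (forall k, beran_den (NW K h X x) s k != 0) ->
      (forall i, xinu i = (d <= T i)) ->
      Sc_h K h X T delta xinu s t x = Beran_h K h X T delta s t x),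
   (* 3. no censoring *)
   (forall x t : R,
      NW_den K h X x != 0 ->
      (forall k, cure_den (NW K h X x) xinu s k != 0) ->
      (forall i, (delta i && ~~ xinu i) || (~~ delta i && xinu i)) ->
      (forall i j, xinu i -> ~~ xinu j -> T j < T i) ->
      (forall i, xinu i -> t < T i) ->
      Sc_h K h X T delta xinu s t x =
        \sum_(k < n) NW K h X x (s k) * (t < T (s k))%R%:R) &
   (* 4. unconditional setting *)
   (forall t : R,
      Sc_n T delta xinu s t =
        \prod_(k < n)
          (1 - (delta (s k))%:R * (T (s k) <= t)%R%:R /
                 ((n - k)%:R + \sum_(j < n | (j < k)%N) (xinu (s j))%:R)))
   /\
   (forall d t : R,
      (forall i, xinu i = (d <= T i)) ->
      Sc_n T delta xinu s t =
        \prod_(k < n)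
          (1 - (delta (s k))%:R * (T (s k) <= t)%R%:R / (n - k)%:R))].
Proof.
move=> hpos Hv Tinj Hs.
have H4a : forall t : R,
      Sc_n T delta xinu s t =
        \prod_(k < n)
          (1 - (delta (s k))%:R * (T (s k) <= t)%R%:R /
                 ((n - k)%:R + \sum_(j < n | (j < k)%N) (xinu (s j))%:R)).
  move=> t; rewrite /Sc_n /Sc_gen; apply: eq_bigr => k _.
  rewrite /cure_den /=.
  rewrite sum_ge_const -mulr_sumr.
  have nz : (n%:R : R) != 0 by rewrite pnatr_eq0 -lt0n (leq_ltn_trans _ (ltn_ord k)).
  rewrite -[_ *+ (n - k)]mulr_natr -mulrDr invfM invrK.
  set v := ((n - k)%:R + _)^-1.
  by field.
split.
- move=> x t _ _ _ Hx; rewrite /Sc_h /Beran_h /Sc_gen /Sb_gen.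
  apply: eq_bigr => k _; rewrite /cure_den /beran_den [\sum_(j < n | (j < k)%N) _]big1 ?addr0 //.
  by move=> j _; rewrite Hx mulr0.
- move=> d x t _ _ _ Hx; rewrite /Sc_h /Beran_h /Sc_gen /Sb_gen.
  apply: eq_bigr => k _; case Hd: (delta (s k)); last by rewrite !mul0r.
  rewrite /cure_den /beran_den [\sum_(j < n | (j < k)%N) _]big1 ?addr0 //.
  by move=> j Hj; rewrite (@thr_false _ _ T delta xi xinu s d k j Hv Hs Hx Hd Hj) mulr0.
- move=> x t Hden Hcd Hdx Hord Ht.
  set B := NW K h X x.
  have s_inj : injective s.
    move=> k l e; apply: val_inj; case: (ltngtP k l) => // hkl.
      by have := Hs _ _ hkl; rewrite e ltxx.
    by have := Hs _ _ hkl; rewrite e ltxx.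
  have sumB : \sum_(j < n) B (s j) = 1.
    transitivity (\sum_(j < n) B j); first by rewrite [RHS](reindex_inj s_inj).
    rewrite /B /NW -mulr_suml; exact: divff Hden.
  pose f (k : 'I_n) := 1 - (delta (s k))%:R * B (s k) * (T (s k) <= t)%R%:R / cure_den B xinu s k.
  pose E (m : nat) := \sum_(j < n | (m <= j)%N || (t < T (s j))) B (s j).
  pose D (m : nat) := \sum_(j < n | (m <= j)%N) B (s j).
  have main : forall m, (m <= n)%N -> \prod_(k < n | (k < m)%N) f k = E m.
    elim=> [|m IH] Hm.
      rewrite big_pred0; last by move=> k; rewrite ltn0.
      by rewrite /E (eq_bigl xpredT) ?sumB.
    set i0 : 'I_n := Ordinal Hm.
    rewrite (bigD1 i0) /=; last by rewrite ltnSn.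
    rewrite (eq_bigl (fun k : 'I_n => (k < m)%N)); last first.
      move=> k; rewrite -(inj_eq val_inj) /= ltnS; case: (ltngtP k m) => //.
    rewrite IH ?(ltnW Hm) //.
    have Dsplit : D m = B (s i0) + D m.+1.
      rewrite /D (bigD1 i0) //=; congr (_ + _); apply: eq_bigl => j.
      rewrite -(inj_eq val_inj) /=; case: (ltngtP m j) => //.
    case HT: (T (s i0) <= t).
    + have Hx0 : xinu (s i0) = false.
        apply/negbTE/negP => hx; have := Ht _ hx; rewrite ltNge HT //.
      have Hd0 : delta (s i0) = true.
        by move: (Hdx (s i0)); rewrite Hx0; case: (delta (s i0)).
      have Hc : cure_den B xinu s i0 = D m.
        rewrite /cure_den [\sum_(j < n | (j < i0)%N) _]big1 ?addr0 //.
        move=> j Hj; case Hxj: (xinu (s j)); last by rewrite mulr0.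
        have := Hord _ _ Hxj (negbT Hx0); have := Hs _ _ Hj.
        by move=> a b; have := lt_trans a b; rewrite ltxx.
      have Em : E m = D m.
        rewrite /E /D; apply: eq_bigl => j; case: (leqP m j) => //= hj.
        have hj' : (j < i0)%N by [].
        by rewrite ltNge (le_trans (ltW (Hs _ _ hj')) HT).
      have Em1 : E m.+1 = D m.+1.
        rewrite /E /D; apply: eq_bigl => j; case: (leqP m.+1 j) => //= hj.
        have : T (s j) <= T (s i0).
          rewrite ltnS leq_eqVlt in hj; case/orP: hj => hj.
            by have -> : j = i0 by apply: val_inj; apply/eqP.
          exact: ltW (Hs j i0 hj).
        by move=> hle; rewrite ltNge (le_trans hle HT).
      have nz := Hcd i0; rewrite Hc Dsplit in nz.
      rewrite /f HT Hd0 Hc Em Em1 Dsplit.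
      have e1 : (true%:R : R) = 1 by [].
      rewrite e1 mul1r mulr1; set b := B (s i0); set c := D m.+1.
      by rewrite mulrBl mul1r divfK // addrAC subrr add0r.
    + rewrite /f HT mulr0 mul0r subr0 mul1r /E; apply: eq_bigl => j.
      case: (ltngtP m j) => //= hj.
      have -> : j = i0 by apply: val_inj.
      by rewrite ltNge HT.
  rewrite /Sc_h /Sc_gen -/B.
  rewrite (eq_bigl (fun k : 'I_n => (k < n)%N)); last by move=> k; rewrite ltn_ord.
  rewrite main // /E.
  rewrite big_mkcond /=; apply: eq_bigr => j _.
  by rewrite leqNgt ltn_ord /=; case: (t < T (s j)); rewrite ?mulr1 ?mulr0.
- split; first exact: H4a.
  move=> d t Hx; rewrite H4a; apply: eq_bigr => k _.
  case Hd: (delta (s k)); last by rewrite !mul0r.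
  rewrite big1 ?addr0 //.
  by move=> j Hj; rewrite (@thr_false _ _ T delta xi xinu s d k j Hv Hs Hx Hd Hj).
Qed.
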